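(* If $X$ and $X'$ are homotopy equivalent topological spaces, then $\mathrm{TC}_g(X)=\mathrm{TC}_g(X')$; that is, the generalized topological complexity depends only on the homotopy type of the space.
   Context: For a space $X$, let $X^I$ be the space of continuous paths $[0,1]\to X$ with the compact-open topology and $\pi_X:X^I\rightarrow X\times X$, $\pi_X(\alpha)=(\alpha(0),\alpha(1))$. The generalized topological complexity $\mathrm{TC}_g(X)$ is the least nonnegative integer $n$ such that $X\times X$ admits a cover by $n+1$ arbitrary (not necessarily open) subsets $A_0,\dots,A_n$ on each of which there exists a continuous local section $s_i:A_i\to X^I$ of $\pi_X$ (i.e. $\pi_X\circ s_i$ is the inclusion); $\mathrm{TC}_g(X)=\infty$ if no such $n$ exists. *)

(* Defs.v *)
From HB Require Import structures.
From mathcomp Require Import all_boot all_order all_algebra.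
From mathcomp Require Import all_classical all_reals interval_inference set_interval topology num_topology normedtype subtype_topology function_spaces.
Import numFieldNormedType.Exports.
Import Order.TTheory GRing.Theory Num.Theory.
Local Open Scope classical_set_scope.
Local Open Scope ring_scope.

Set Implicit Arguments.
Unset Strict Implicit.
Unset Printing Implicit Defensive.

Notation unitI R := (set_type [set` (`[0, 1]%R : interval R)]%classic).

Lemma unitI0_mem (R : realType) : (0 : R) \in [set` (`[0, 1]%R : interval R)].
Proof. by apply/mem_set; rewrite /= in_itv /= lexx ler01. Qed.
Lemma unitI1_mem (R : realType) : (1 : R) \in [set` (`[0, 1]%R : interval R)].
Proof. by apply/mem_set; rewrite /= in_itv /= lexx ler01. Qed.

Definition I0 (R : realType) : unitI R := exist _ 0 (unitI0_mem R).
Definition I1 (R : realType) : unitI R := exist _ 1 (unitI1_mem R).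

Notation pathSpace R X :=
  (set_type [set f : {compact-open, unitI R -> X} | continuous f]%classic).

Definition pathFun (R : realType) (X : topologicalType) (g : pathSpace R X)
  : unitI R -> X := val g.

Definition local_section (R : realType) (X : topologicalType)
    (A : set (X * X)) (s : set_type A -> pathSpace R X) : Prop :=
  continuous s /\
  forall a : set_type A,
    pathFun (s a) (I0 R) = (val a).1 /\ pathFun (s a) (I1 R) = (val a).2.

Definition TCg_cover (R : realType) (X : topologicalType) (n : nat) : Prop :=
  exists A : 'I_n.+1 -> set (X * X),
    (forall p : X * X, exists i, A i p) /\
    (forall i, exists s : set_type (A i) -> pathSpace R X, local_section s).

(* TC_g(X) : Some n for the least such n, None standing for infinity. *)
Definition TCg (R : realType) (X : topologicalType) : option nat :=
  match pselect (exists n, `[< TCg_cover R X n >]) with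
  | left h => Some (ex_minn h)
  | right _ => None
  end.

Definition homotopic (R : realType) (X Y : topologicalType) (f g : X -> Y) :=
  exists H : X * unitI R -> Y,
    continuous H /\ (forall x, H (x, I0 R) = f x) /\ (forall x, H (x, I1 R) = g x).

Definition homotopy_equivalent (R : realType) (X Y : topologicalType) :=
  exists (f : X -> Y) (g : Y -> X),
    continuous f /\ continuous g /\
    homotopic R (g \o f) idfun /\ homotopic R (f \o g) idfun.

(* Main.v *)
Require Import Defs.
From HB Require Import structures.
From mathcomp Require Import all_boot all_order all_algebra.
From mathcomp Require Import all_classical all_reals interval_inference set_interval topology num_topology normedtype subtype_topology function_spaces.
From mathcomp Require Import lra.
Import numFieldNormedType.Exports.
Import Order.TTheory GRing.Theory Num.Theory.
Local Open Scope classical_set_scope.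
Local Open Scope ring_scope.
Set Implicit Arguments.
Unset Strict Implicit.
Unset Printing Implicit Defensive.


Section Aux.
Variable R : realType.

Definition clr (r : R) : R := Num.min (Num.max r 0) 1.

Lemma clr_mem (r : R) : clr r \in [set` (`[0, 1]%R : interval R)].
Proof.
apply/mem_set; rewrite /= in_itv /= /clr.
apply/andP; split.
- by rewrite le_min ler01 le_max lexx orbT.
- by rewrite ge_min lexx orbT.
Qed.

Definition clI (r : R) : unitI R := exist _ (clr r) (clr_mem r).

Lemma clr_cont : continuous clr.
Proof.
move=> x; apply: (@continuous_min R R (fun r => Num.max r 0) (fun=> 1)).
  apply: (@continuous_max R R id (fun=> 0)) => //; exact: cvg_cst.
exact: cvg_cst.
Qed.

Lemma clI_cont : continuous clI.
Proof.
apply: continuous_comp_initial.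
exact: clr_cont.
Qed.

Lemma clr_id (r : R) : 0 <= r <= 1 -> clr r = r.
Proof.
move=> /andP[r0 r1]; rewrite /clr (max_l r0) (min_l r1) //.
Qed.

Lemma clI_val (t : unitI R) : clI (val t) = t.
Proof.
apply: val_inj => /=; apply: clr_id.
by case: t => t /= /set_mem; rewrite /= in_itv.
Qed.

Lemma unitI_compact : compact [set: unitI R].
Proof.
have -> : [set: unitI R] = clI @` `[0, 1]%classic.
  apply/seteqP; split => // t _; exists (val t); last exact: clI_val.
  by case: t => t /= /set_mem.
apply: continuous_compact; last exact: segment_compact.
apply: continuous_subspaceT => x; exact: clI_cont.
Qed.

Lemma unitI_lc : locally_compact [set: unitI R].
Proof.
move=> x _; exists setT; first by rewrite withinET; exact: filterT.
split; [exact: unitI_compact | exact: closedT].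
Qed.

Lemma unitI_regular : @regular_space (unitI R).
Proof. exact: uniform_regular. Qed.

End Aux.


Section Curry.
Variables (R : realType) (X T : topologicalType).

Lemma pathFun_cont (p : pathSpace R X) : continuous (pathFun p).
Proof. exact: (set_mem (valP p)). Qed.

Lemma uncurry_section (s : T -> pathSpace R X) : continuous s ->
  continuous (fun z : T * unitI R => pathFun (s z.1) z.2).
Proof.
move=> cs.
have := @continuous_uncurry_regular T (unitI R) X (fun t => pathFun (s t))
  (@unitI_lc R) (@unitI_regular R).
move=> H.
have -> : (fun z : T * unitI R => pathFun (s z.1) z.2) = uncurry (fun t => pathFun (s t)).
  by apply/funext => -[].
apply: H; last by move=> u; exact: pathFun_cont.
move=> t.
have := @continuous_comp T (pathSpace R X) {compact-open, unitI R -> X} s val t (cs t) (@initial_continuous _ _ _ _).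
exact.
Qed.

Lemma curry_mem (F : T * unitI R -> X) (t : T) : continuous F ->
  (curry F t : {compact-open, unitI R -> X}) \in
    [set f : {compact-open, unitI R -> X} | continuous f].
Proof.
move=> cF; apply/mem_set => /=.
exact: (proj2 (continuous_curry cF)).
Qed.

Definition curry_section (F : T * unitI R -> X) (cF : continuous F)
  : T -> pathSpace R X := fun t => exist (fun f => f \in [set f : {compact-open, unitI R -> X} | continuous f])
    (curry F t) (curry_mem t cF).

Lemma curry_section_cont (F : T * unitI R -> X) (cF : continuous F) :
  continuous (curry_section cF).
Proof.
apply: continuous_comp_initial.
exact: (proj1 (continuous_curry cF)).
Qed.

End Curry.


Lemma paste_cont (R : realType) (T Y : topologicalType) (phi : T -> R) (c : R)
  (g h : T -> Y) : continuous phi -> continuous g -> continuous h ->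
  (forall y, phi y = c -> g y = h y) ->
  continuous (fun y => if phi y <= c then g y else h y).
Proof.
move=> cphi cg ch gh x U; rewrite nbhs_simpl /= => Ufx.
have [lt|gt|eq] := ltgtP (phi x) c.
- destruct (phi x <= c) eqn:E; last by move: E; rewrite (ltW lt).
  have N1 : nbhs x [set y | phi y < c] := cphi x _ (lt_nbhsl lt).
  have N2 : nbhs x (g @^-1` U) := cg x _ Ufx.
  apply: filterS2 N1 N2 => y /= ly gy.
  destruct (phi y <= c) eqn:E'; last by move: E'; rewrite (ltW ly).
  exact: gy.
- destruct (phi x <= c) eqn:E; first by move: E; rewrite leNgt gt.
  have N1 : nbhs x [set y | c < phi y] := cphi x _ (lt_nbhsr gt).
  have N2 : nbhs x (h @^-1` U) := ch x _ Ufx.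
  apply: filterS2 N1 N2 => y /= ly hy.
  destruct (phi y <= c) eqn:E'; first by move: E'; rewrite leNgt ly.
  exact: hy.
- destruct (phi x <= c) eqn:E; last by move: E; rewrite eq lexx.
  have N2 : nbhs x (g @^-1` U) := cg x _ Ufx.
  have N3 : nbhs x (h @^-1` U) by apply: ch; rewrite -gh.
  apply: filterS2 N2 N3 => y /= gy hy.
  by destruct (phi y <= c).
Qed.


Lemma cont_pair (T U V : topologicalType) (u : T -> U) (v : T -> V) :
  continuous u -> continuous v -> continuous (fun z => (u z, v z)).
Proof. by move=> cu cv z; apply: cvg_pair; [exact: cu | exact: cv]. Qed.

Lemma cont_fst (U V : topologicalType) : continuous (@fst U V).
Proof. by move=> z; exact: cvg_fst. Qed.

Lemma cont_snd (U V : topologicalType) : continuous (@snd U V).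
Proof. by move=> z; exact: cvg_snd. Qed.

Lemma cont_val (U : topologicalType) (A : set U) : continuous (@set_val U A).
Proof. exact: initial_continuous. Qed.

Lemma cont_aff (R : realType) (a b : R) : continuous (fun r : R => a + b * r).
Proof.
move=> r; apply: cvgD; first exact: cvg_cst.
apply: cvgM; [exact: cvg_cst | exact: cvg_id].
Qed.

Lemma clI0 (R : realType) : clI (0 : R) = I0 R.
Proof. by apply: val_inj; apply: clr_id; rewrite lexx ler01. Qed.

Lemma clI1 (R : realType) : clI (1 : R) = I1 R.
Proof. by apply: val_inj; apply: clr_id; rewrite lexx ler01. Qed.


Section Transfer.
Variables (R : realType) (X Y : topologicalType).
Variables (f : X -> Y) (g : Y -> X) (H : Y * unitI R -> Y).
Hypotheses (cf : continuous f) (cg : continuous g) (cH : continuous H).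
Hypotheses (H0 : forall y, H (y, I0 R) = f (g y)) (H1 : forall y, H (y, I1 R) = y).
Variables (A : set (X * X)) (s : set_type A -> pathSpace R X).
Hypothesis (ls : local_section s).

Definition A' : set (Y * Y) := [set p | A (g p.1, g p.2)].

Lemma ga_mem (a : set_type A') : (g (val a).1, g (val a).2) \in A.
Proof. apply/mem_set; exact: (set_mem (valP a)). Qed.

Definition ga (a : set_type A') : set_type A := exist (fun p => p \in A) _ (ga_mem a).

Lemma ga_cont : continuous ga.
Proof.
apply: continuous_comp_initial => /=.
apply: (@cont_pair _ _ _ (fun a : set_type A' => g (val a).1) (fun a : set_type A' => g (val a).2)).
- move=> a; apply: continuous_comp; last exact: cg.
  apply: continuous_comp; [exact: cont_val | exact: cont_fst].
- move=> a; apply: continuous_comp; last exact: cg.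
  apply: continuous_comp; [exact: cont_val | exact: cont_snd].
Qed.

Definition S (z : set_type A * unitI R) : X := pathFun (s z.1) z.2.

Lemma S_cont : continuous S.
Proof. exact: uncurry_section (proj1 ls). Qed.

Definition tt (z : set_type A' * unitI R) : R := val z.2.

Lemma tt_cont : continuous tt.
Proof. move=> z; apply: continuous_comp; [exact: cont_snd | exact: cont_val]. Qed.

Definition P1 (z : set_type A' * unitI R) : Y := H ((val z.1).1, clI (1 + (-3) * tt z)).
Definition P2 (z : set_type A' * unitI R) : Y := f (S (ga z.1, clI (-1 + 3 * tt z))).
Definition P3 (z : set_type A' * unitI R) : Y := H ((val z.1).2, clI (-2 + 3 * tt z)).

Lemma clt_cont (a b : R) : continuous (fun z => clI (a + b * tt z)).
Proof.
move=> z; apply: continuous_comp; last exact: clI_cont.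
apply: (@continuous_comp _ _ _ tt (fun r => a + b * r)); [exact: tt_cont | exact: cont_aff].
Qed.

Lemma P1_cont : continuous P1.
Proof.
move=> z; apply: continuous_comp; last exact: cH.
apply: cont_pair; last exact: clt_cont.
move=> w.
apply: (@continuous_comp _ _ _ (fun w : set_type A' * unitI R => val w.1) fst); last exact: cont_fst.
exact: (continuous_comp (@cont_fst _ _ w) (@cont_val _ A' _)).
Qed.

Lemma P3_cont : continuous P3.
Proof.
move=> z; apply: continuous_comp; last exact: cH.
apply: cont_pair; last exact: clt_cont.
move=> w.
apply: (@continuous_comp _ _ _ (fun w : set_type A' * unitI R => val w.1) snd); last exact: cont_snd.
exact: (continuous_comp (@cont_fst _ _ w) (@cont_val _ A' _)).
Qed.

Lemma P2_cont : continuous P2.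
Proof.
move=> z; apply: continuous_comp; last exact: cf.
apply: continuous_comp; last exact: S_cont.
apply: cont_pair; last exact: clt_cont.
move=> w; apply: continuous_comp; [exact: cont_fst | exact: ga_cont].
Qed.

Definition Q (z : set_type A' * unitI R) : Y := if tt z <= 2 / 3 then P2 z else P3 z.
Definition F (z : set_type A' * unitI R) : Y := if tt z <= 1 / 3 then P1 z else Q z.

Lemma S0 a : S (a, I0 R) = (val a).1.
Proof. exact: (proj1 (proj2 ls a)). Qed.
Lemma S1 a : S (a, I1 R) = (val a).2.
Proof. exact: (proj2 (proj2 ls a)). Qed.

Lemma Q_cont : continuous Q.
Proof.
apply: paste_cont; [exact: tt_cont | exact: P2_cont | exact: P3_cont |].
move=> z tz; rewrite /P2 /P3 tz.
have -> : -1 + 3 * (2 / 3 : R) = 1 by lra.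
have -> : -2 + 3 * (2 / 3 : R) = 0 by lra.
by rewrite clI0 clI1 S1 H0.
Qed.

Lemma F_cont : continuous F.
Proof.
apply: paste_cont; [exact: tt_cont | exact: P1_cont | exact: Q_cont |].
move=> z tz; rewrite /Q /P1 /P2 tz.
have -> : (1 / 3 : R) <= 2 / 3 by lra.
have -> : 1 + (-3) * (1 / 3 : R) = 0 by lra.
have -> : -1 + 3 * (1 / 3 : R) = 0 by lra.
by rewrite clI0 S0 H0.
Qed.

Definition s' : set_type A' -> pathSpace R Y := curry_section F_cont.

Lemma ls' : local_section s'.
Proof.
split; first exact: curry_section_cont.
move=> a; rewrite /pathFun /s' /curry_section /= /curry /F /Q /tt /=.
split.
- have -> : (0 : R) <= 1 / 3 by lra.
  rewrite /P1 /tt /=.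
  have -> : 1 + (-3) * (0 : R) = 1 by lra.
  by rewrite clI1 H1.
- have -> : (1 : R) <= 1 / 3 = false by apply/negbTE; rewrite -ltNge; lra.
  have -> : (1 : R) <= 2 / 3 = false by apply/negbTE; rewrite -ltNge; lra.
  rewrite /P3 /tt /=.
  have -> : -2 + 3 * (1 : R) = 1 by lra.
  by rewrite clI1 H1.
Qed.

End Transfer.


Lemma cover_transfer (R : realType) (X Y : topologicalType) (f : X -> Y) (g : Y -> X) :
  continuous f -> continuous g -> homotopic R (f \o g) idfun ->
  forall n, TCg_cover R X n -> TCg_cover R Y n.
Proof.
move=> cf cg [H [cH [H0 H1]]] n [Af [cov secs]].
exists (fun i => A' g (Af i)); split.
  move=> p; have [i Hi] := cov (g p.1, g p.2); by exists i.
move=> i; have [s ls] := secs i.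
exists (s' cf cg cH H0 ls); exact: (ls' cf cg cH H0 H1 ls).
Qed.

Lemma TCg_ext (R : realType) (X Y : topologicalType) :
  (forall n, TCg_cover R X n -> TCg_cover R Y n) ->
  (forall n, TCg_cover R Y n -> TCg_cover R X n) ->
  TCg R X = TCg R Y.
Proof.
move=> XY YX; rewrite /TCg.
case: pselect => hX; case: pselect => hY.
- congr Some.
  case: ex_minnP => m /asboolP Pm minm; case: ex_minnP => m' /asboolP Pm' minm'.
  apply/eqP; rewrite eqn_leq; apply/andP; split.
    by apply: minm; apply/asboolP; exact: YX.
  by apply: minm'; apply/asboolP; exact: XY.
- exfalso; apply: hY; case: hX => n /asboolP Pn; exists n; apply/asboolP; exact: XY.
- exfalso; apply: hX; case: hY => n /asboolP Pn; exists n; apply/asboolP; exact: YX.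
- by [].
Qed.

Theorem mainTheorem3 (R : realType) (X X' : topologicalType) :
  homotopy_equivalent R X X' -> TCg R X = TCg R X'.
Proof.
move=> [f [g [cf [cg [hgf hfg]]]]].
apply: TCg_ext.
- exact: cover_transfer cf cg hfg.
- exact: cover_transfer cg cf hgf.
Qed.
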